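(* Let $N\ge2$ and let $u\in C(S^{N-1},(0,\infty))$ be nonconstant and separable in $S^{N-1}$. Then there exist $M\in O(N)$ and $h_1,h_2\in[-1,1]$ such that: (i) $h_1>h_2$; (ii) $u_M^{-1}(\max_{S^{N-1}}u_M)=\{x\in S^{N-1}:x_N\ge h_1\}$ and $u_M^{-1}(\min_{S^{N-1}}u_M)=\{x\in S^{N-1}:x_N\le h_2\}$; (iii) for every $h\in[-1,1]$, $u_M$ is constant on $\{x\in S^{N-1}:x_N=h\}$; (iv) the function $\alpha\mapsto u_M(0_{N-2},\cos\alpha,\sin\alpha)$ is nonincreasing on $[\pi/2,3\pi/2]$.
   Context: $S^{N-1}$ is the unit sphere in $\mathbb{R}^N$ centered at $0$; $O(N)$ is the orthogonal group; for $M\in O(N)$, $u_M(x):=u(M^{-1}x)$; $0_k$ denotes the zero vector in $\mathbb{R}^k$. For an open half-space $H\subset\mathbb{R}^N$, $\sigma_H$ denotes the reflection across $\partial H$. A function $u\in C(S^{N-1},\mathbb{R})$ is separable in $S^{N-1}$ if for every open half-space $H\subset\mathbb{R}^N$ with $0\in\partial H$, either $u(x)\ge u(\sigma_Hx)$ for all $x\in H\cap S^{N-1}$, or $u(x)\le u(\sigma_Hx)$ for all $x\in H\cap S^{N-1}$. *)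

(* Defs.v *)
From Stdlib Require Import Reals Lra.
Open Scope R_scope.

(* Points of R^N are represented as functions nat -> R; only coordinates
   0..N-1 are meaningful. Coordinate x_k (1-based, paper) is x (k-1). *)
Definition vec := nat -> R.

Fixpoint sumN (n : nat) (f : nat -> R) : R :=
  match n with
  | O => 0
  | S m => sumN m f + f m
  end.

Definition dot (N : nat) (x y : vec) : R := sumN N (fun i => x i * y i).

Definition inRN (N : nat) (x : vec) : Prop := forall i, (N <= i)%nat -> x i = 0.

Definition sphere (N : nat) (x : vec) : Prop := inRN N x /\ dot N x x = 1.

Definition dist (N : nat) (x y : vec) : R :=
  sqrt (sumN N (fun i => (x i - y i) ^ 2)).

Definition cont_on_sphere (N : nat) (u : vec -> R) : Prop :=
  forall x, sphere N x -> forall eps, eps > 0 ->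
    exists delta, delta > 0 /\
      forall y, sphere N y -> dist N x y < delta -> Rabs (u y - u x) < eps.

Definition orthogonal (N : nat) (M : nat -> nat -> R) : Prop :=
  forall i j, (i < N)%nat -> (j < N)%nat ->
    sumN N (fun k => M k i * M k j) = if Nat.eqb i j then 1 else 0.

(* M^{-1} x = M^T x for orthogonal M. *)
Definition mat_inv_apply (N : nat) (M : nat -> nat -> R) (x : vec) : vec :=
  fun i => if Nat.ltb i N then sumN N (fun k => M k i * x k) else 0.

(* u_M(x) := u(M^{-1} x) *)
Definition rot (N : nat) (M : nat -> nat -> R) (u : vec -> R) : vec -> R :=
  fun x => u (mat_inv_apply N M x).

Definition reflect (N : nat) (a x : vec) : vec :=
  fun i => if Nat.ltb i N then x i - 2 * dot N a x / dot N a a * a i else 0.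

(* Separability: every open half-space H with 0 in its boundary is
   H = {x : <a,x> > 0} for some nonzero a in R^N. *)
Definition separable (N : nat) (u : vec -> R) : Prop :=
  forall a : vec, inRN N a -> dot N a a <> 0 ->
    (forall x, sphere N x -> dot N a x > 0 -> u x >= u (reflect N a x)) \/
    (forall x, sphere N x -> dot N a x > 0 -> u x <= u (reflect N a x)).

Definition circ_pt (N : nat) (t : R) : vec :=
  fun i => if Nat.eqb i (N - 2) then cos t
           else if Nat.eqb i (N - 1) then sin t else 0.

(* Main.v *)
Require Import Defs.
From Coquelicot Require Import Coquelicot.
From Stdlib Require Import Reals Lra Lia FunctionalExtensionality Classical ClassicalEpsilon.
Open Scope R_scope.


Lemma sumN_ext n f g : (forall i, (i < n)%nat -> f i = g i) -> sumN n f = sumN n g.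
Proof. induction n; simpl; intros H; auto. rewrite IHn by (intros; apply H; lia). rewrite H by lia. reflexivity. Qed.
Lemma sumN_plus n f g : sumN n (fun i => f i + g i) = sumN n f + sumN n g.
Proof. induction n; simpl; [lra|]. rewrite IHn. lra. Qed.
Lemma sumN_scal n c f : sumN n (fun i => c * f i) = c * sumN n f.
Proof. induction n; simpl; [lra|]. rewrite IHn. lra. Qed.
Lemma sumN_zero n : sumN n (fun _ => 0) = 0.
Proof. induction n; simpl; [lra|]. rewrite IHn. lra. Qed.
Lemma sumN_nonneg n f : (forall i, (i<n)%nat -> 0 <= f i) -> 0 <= sumN n f.
Proof. induction n; simpl; intros H; [lra|]. assert (0 <= f n) by (apply H; lia). assert (0 <= sumN n f) by (apply IHn; intros; apply H; lia). lra. Qed.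
Lemma sumN_nonneg_zero n f : (forall i, (i<n)%nat -> 0 <= f i) -> sumN n f = 0 -> forall i, (i < n)%nat -> f i = 0.
Proof. induction n; simpl; intros H Hs i Hi; [lia|].
  assert (0 <= f n) by (apply H; lia). assert (0 <= sumN n f) by (apply sumN_nonneg; intros; apply H; lia).
  destruct (Nat.eq_dec i n). subst; lra. apply IHn; try lra. intros; apply H; lia. lia. Qed.
Lemma sumN_delta n k f : (k < n)%nat -> sumN n (fun i => (if Nat.eqb i k then 1 else 0) * f i) = f k.
Proof. induction n; simpl; intros H; [lia|]. destruct (Nat.eq_dec k n).
  - subst. rewrite Nat.eqb_refl. rewrite (sumN_ext _ _ (fun _ => 0)). rewrite sumN_zero; lra.
    intros i Hi. destruct (Nat.eqb_spec i n); [lia|lra].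
  - rewrite IHn by lia. destruct (Nat.eqb_spec n k); [lia|lra]. Qed.

Definition vadd (x y : vec) : vec := fun i => x i + y i.
Definition vsc (c : R) (x : vec) : vec := fun i => c * x i.
Definition vsub (x y : vec) : vec := fun i => x i - y i.
Definition ev (k : nat) : vec := fun i => if Nat.eqb i k then 1 else 0.

Lemma dot_comm N x y : dot N x y = dot N y x.
Proof. unfold dot. apply sumN_ext; intros; ring. Qed.
Lemma dot_add_l N x y z : dot N (vadd x y) z = dot N x z + dot N y z.
Proof. unfold dot, vadd. rewrite <- sumN_plus. apply sumN_ext; intros; ring. Qed.
Lemma dot_add_r N x y z : dot N z (vadd x y) = dot N z x + dot N z y.
Proof. rewrite dot_comm, dot_add_l, (dot_comm N x), (dot_comm N y). auto. Qed.
Lemma dot_sc_l N c x y : dot N (vsc c x) y = c * dot N x y.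
Proof. unfold dot, vsc. rewrite <- sumN_scal. apply sumN_ext; intros; ring. Qed.
Lemma dot_sc_r N c x y : dot N y (vsc c x) = c * dot N y x.
Proof. rewrite dot_comm, dot_sc_l, dot_comm. auto. Qed.
Lemma dot_sub_l N x y z : dot N (vsub x y) z = dot N x z - dot N y z.
Proof. unfold dot, vsub. replace (sumN N (fun i => x i * z i) - sumN N (fun i => y i * z i)) with
  (sumN N (fun i => x i * z i) + (-1) * sumN N (fun i => y i * z i)) by ring.
  rewrite <- sumN_scal, <- sumN_plus. apply sumN_ext; intros; ring. Qed.
Lemma dot_sub_r N x y z : dot N z (vsub x y) = dot N z x - dot N z y.
Proof. rewrite dot_comm, dot_sub_l, (dot_comm N x), (dot_comm N y). auto. Qed.
Lemma dot_self_nonneg N x : 0 <= dot N x x.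
Proof. unfold dot. apply sumN_nonneg; intros; nra. Qed.
Lemma dot_self_zero N x : dot N x x = 0 -> forall i, (i < N)%nat -> x i = 0.
Proof. unfold dot; intros H i Hi. pose proof (sumN_nonneg_zero N (fun i => x i * x i)) as T.
  simpl in T. assert (x i * x i = 0) by (apply T; auto; intros; nra). nra. Qed.
Lemma dot_ev_r N x k : (k < N)%nat -> dot N x (ev k) = x k.
Proof. intros. unfold dot, ev. rewrite <- (sumN_delta N k x) by auto. apply sumN_ext; intros; ring. Qed.
Lemma dot_ev_l N x k : (k < N)%nat -> dot N (ev k) x = x k.
Proof. intros. rewrite dot_comm. apply dot_ev_r; auto. Qed.

Lemma inRN_add N x y : inRN N x -> inRN N y -> inRN N (vadd x y).
Proof. unfold inRN, vadd; intros; rewrite H, H0; auto; lra. Qed.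
Lemma inRN_sc N c x : inRN N x -> inRN N (vsc c x).
Proof. unfold inRN, vsc; intros; rewrite H; auto; lra. Qed.
Lemma inRN_sub N x y : inRN N x -> inRN N y -> inRN N (vsub x y).
Proof. unfold inRN, vsub; intros; rewrite H, H0; auto; lra. Qed.
Lemma inRN_ev N k : (k < N)%nat -> inRN N (ev k).
Proof. unfold inRN, ev; intros. destruct (Nat.eqb_spec i k); auto; lia. Qed.

Lemma vec_eq N x y : inRN N x -> inRN N y -> (forall i, (i < N)%nat -> x i = y i) -> x = y.
Proof. intros Hx Hy H. apply functional_extensionality; intros i.
  destruct (Nat.lt_ge_cases i N). auto. rewrite Hx, Hy; auto. Qed.

Lemma dot_zero_vec N x : inRN N x -> dot N x x = 0 -> x = (fun _ => 0).
Proof. intros Hx H. apply functional_extensionality; intros i. destruct (Nat.lt_ge_cases i N).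
  apply dot_self_zero with N; auto. apply Hx; auto. Qed.

Lemma reflect_eq N a x : inRN N a -> inRN N x ->
  reflect N a x = vsub x (vsc (2 * dot N a x / dot N a a) a).
Proof. intros Ha Hx. apply functional_extensionality; intros i. unfold reflect, vsub, vsc.
  destruct (Nat.ltb_spec i N). ring. rewrite Ha, Hx; auto. ring. Qed.
Lemma inRN_reflect N a x : inRN N (reflect N a x).
Proof. unfold inRN, reflect; intros. destruct (Nat.ltb_spec i N); auto; lia. Qed.
Lemma dot_reflect_a N a x : inRN N a -> inRN N x -> dot N a a <> 0 -> dot N a (reflect N a x) = - dot N a x.
Proof. intros. rewrite reflect_eq by auto. rewrite dot_sub_r, dot_sc_r. field. auto. Qed.
Lemma dot_reflect N a x y : inRN N a -> inRN N x -> inRN N y -> dot N a a <> 0 ->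
  dot N (reflect N a x) y = dot N x (reflect N a y).
Proof. intros. rewrite !reflect_eq by auto. rewrite dot_sub_l, dot_sub_r, dot_sc_l, dot_sc_r.
  rewrite (dot_comm N x a). field. auto. Qed.
Lemma reflect_invol N a x : inRN N a -> inRN N x -> dot N a a <> 0 -> reflect N a (reflect N a x) = x.
Proof. intros. rewrite (reflect_eq N a (reflect N a x)) by (auto; apply inRN_reflect).
  rewrite dot_reflect_a by auto. rewrite reflect_eq by auto. apply functional_extensionality; intros i.
  unfold vsub, vsc. field. auto. Qed.
Lemma dot_reflect_self N a x : inRN N a -> inRN N x -> dot N a a <> 0 ->
  dot N (reflect N a x) (reflect N a x) = dot N x x.
Proof. intros. rewrite dot_reflect by (auto; apply inRN_reflect). rewrite reflect_invol; auto. Qed.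
Lemma sphere_reflect N a x : inRN N a -> dot N a a <> 0 -> sphere N x -> sphere N (reflect N a x).
Proof. intros Ha Haa [Hx Hxx]. split. apply inRN_reflect. rewrite dot_reflect_self; auto. Qed.
Lemma reflect_opp N a x : reflect N (vsc (-1) a) x = reflect N a x.
Proof. unfold reflect. apply functional_extensionality; intros i. destruct (i <? N)%nat; auto.
  f_equal. rewrite dot_sc_l, dot_sc_l, dot_sc_r. unfold vsc. destruct (Req_dec (dot N a a) 0) as [E|E].
  rewrite E. unfold Rdiv. rewrite !Rmult_0_r, Rinv_0. ring. field. auto. Qed.
Lemma reflect_scale N c a x : c <> 0 -> reflect N (vsc c a) x = reflect N a x.
Proof. intros Hc. unfold reflect. apply functional_extensionality; intros i. destruct (i <? N)%nat; auto.
  f_equal. rewrite dot_sc_l, dot_sc_l, dot_sc_r. unfold vsc. destruct (Req_dec (dot N a a) 0) as [E|E].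
  rewrite E. unfold Rdiv. rewrite !Rmult_0_r, Rinv_0. ring. field. auto. Qed.

Lemma sphere_eq_of_dot N x y : sphere N x -> sphere N y -> dot N x y = 1 -> x = y.
Proof. intros [Hx Hxx] [Hy Hyy] H. assert (dot N (vsub x y) (vsub x y) = 0).
  rewrite dot_sub_l, !dot_sub_r, (dot_comm N y x). lra.
  pose proof (dot_zero_vec N _ (inRN_sub N x y Hx Hy) H0) as E.
  apply functional_extensionality; intros i. assert (vsub x y i = 0) by (rewrite E; auto). unfold vsub in H1. lra. Qed.
Lemma dot_sphere_le N x y : sphere N x -> sphere N y -> dot N x y <= 1.
Proof. intros [Hx Hxx] [Hy Hyy]. pose proof (dot_self_nonneg N (vsub x y)).
  rewrite dot_sub_l, !dot_sub_r, (dot_comm N y x) in H. lra. Qed.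
Lemma dot_sphere_ge N x y : sphere N x -> sphere N y -> -1 <= dot N x y.
Proof. intros [Hx Hxx] [Hy Hyy]. pose proof (dot_self_nonneg N (vadd x y)).
  rewrite dot_add_l, !dot_add_r, (dot_comm N y x) in H. lra. Qed.
Lemma swap_pos N x y : sphere N x -> sphere N y -> x <> y -> dot N (vsub x y) x > 0.
Proof. intros Sx Sy Hne. pose proof (dot_sphere_le N x y Sx Sy). destruct Sx as [Hx Hxx].
  rewrite dot_sub_l, Hxx. destruct (Req_dec (dot N y x) 1). exfalso; apply Hne. symmetry. apply (sphere_eq_of_dot N); auto. split; auto.
  rewrite dot_comm in H. lra. Qed.
Lemma swap_nz N x y : sphere N x -> sphere N y -> x <> y -> dot N (vsub x y) (vsub x y) <> 0.
Proof. intros Sx Sy Hne E. pose proof (swap_pos N x y Sx Sy Hne).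
  destruct Sx as [Hx _]; destruct Sy as [Hy _].
  pose proof (dot_zero_vec N _ (inRN_sub N x y Hx Hy) E) as E2. rewrite E2 in H. unfold dot in H. rewrite (sumN_ext _ _ (fun _ => 0)) in H. rewrite sumN_zero in H. lra. intros; ring. Qed.
Lemma swap_reflect N x y : sphere N x -> sphere N y -> x <> y -> reflect N (vsub x y) x = y.
Proof. intros Sx Sy Hne. pose proof (swap_nz N x y Sx Sy Hne) as Hnz.
  destruct Sx as [Hx Hxx]; destruct Sy as [Hy Hyy].
  rewrite reflect_eq by (auto; apply inRN_sub; auto).
  assert (E: dot N (vsub x y) (vsub x y) = 2 * dot N (vsub x y) x).
  { rewrite !dot_sub_l, !dot_sub_r, (dot_comm N y x). lra. }
  rewrite E. rewrite dot_comm. apply functional_extensionality; intros i. unfold vsub, vsc.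
  assert (dot N x (vsub x y) <> 0). rewrite dot_comm. intro Z. rewrite Z in E. lra.
  field. auto. Qed.

Ltac veq := apply functional_extensionality; intro; unfold vadd, vsc, vsub; ring.

Lemma cpt_of_ex_derive (f : R -> R) x : ex_derive f x -> continuity_pt f x.
Proof. intros H. apply continuity_pt_filterlim. apply (ex_derive_continuous f x H). Qed.

Lemma cpt_eps f x : continuity_pt f x -> forall eps, eps > 0 -> exists del, del > 0 /\
  forall y, Rabs (y - x) < del -> Rabs (f y - f x) < eps.
Proof. intros H eps He. destruct (H eps He) as [alp [Ha Hf]]. exists alp; split; auto. intros y Hy.
  destruct (Req_dec y x). subst. rewrite Rminus_diag, Rabs_R0; auto.
  apply Hf. split. split. constructor. auto. simpl; unfold R_dist; auto. Qed.

Lemma sumN_cpt n (F : R -> nat -> R) s0 : (forall i, (i<n)%nat -> continuity_pt (fun s => F s i) s0) ->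
  continuity_pt (fun s => sumN n (F s)) s0.
Proof. induction n; simpl; intros H.
  - apply cpt_of_ex_derive. auto_derive. auto.
  - apply continuity_pt_ext with (f := plus_fct (fun s => sumN n (F s)) (fun s => F s n)).
    intros; reflexivity. apply continuity_pt_plus. apply IHn; intros; apply H; lia. apply H; lia. Qed.

Lemma sq_cpt (f : R -> R) c s0 : continuity_pt f s0 -> continuity_pt (fun s => (c - f s)^2) s0.
Proof. intros H. apply continuity_pt_ext with (f := mult_fct (minus_fct (fct_cte c) f) (minus_fct (fct_cte c) f)).
  intros; unfold mult_fct, minus_fct, fct_cte; ring.
  apply continuity_pt_mult; apply continuity_pt_minus; auto; apply continuity_pt_const; unfold constant, fct_cte; auto. Qed.

Lemma u_cont_curve N u (Hc : cont_on_sphere N u) (c : R -> vec) s0 :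
  sphere N (c s0) -> (forall i, (i < N)%nat -> continuity_pt (fun s => c s i) s0) ->
  forall eps, eps > 0 -> exists del, del > 0 /\ forall s, Rabs (s - s0) < del -> sphere N (c s) ->
    Rabs (u (c s) - u (c s0)) < eps.
Proof. intros S0 Hci eps He. destruct (Hc _ S0 eps He) as [d0 [Hd0 Hd]].
  assert (Hq: continuity_pt (fun s => sumN N (fun i => (c s0 i - c s i)^2)) s0).
  { apply (sumN_cpt N (fun s i => (c s0 i - c s i)^2)). intros. apply sq_cpt. auto. }
  destruct (cpt_eps _ _ Hq (d0^2)) as [del [Hdel Hdq]]. nra.
  exists del; split; auto. intros s Hs Ss. apply Hd; auto.
  pose proof (Hdq s Hs) as Q. rewrite (sumN_ext _ (fun i => (c s0 i - c s0 i)^2) (fun _ => 0)) in Q by (intros; ring).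
  rewrite sumN_zero, Rminus_0_r in Q. unfold Defs.dist.
  assert (Hnn: 0 <= sumN N (fun i => (c s0 i - c s i)^2)) by (apply sumN_nonneg; intros; apply pow2_ge_0).
  rewrite Rabs_right in Q by lra. rewrite <- (sqrt_pow2 d0) by lra. apply sqrt_lt_1_alt. lra. Qed.

Lemma vadd_sc0 d x : vadd d (vsc 0 x) = d.
Proof. apply functional_extensionality; intros i; unfold vadd, vsc; ring. Qed.

Lemma RC N u (Hc : cont_on_sphere N u) d x z : inRN N d -> inRN N x -> sphere N z -> dot N d d <> 0 ->
  forall eps, eps > 0 -> exists del, del > 0 /\ forall s, Rabs s < del ->
    dot N (vadd d (vsc s x)) (vadd d (vsc s x)) <> 0 /\
    (dot N d z > 0 -> dot N (vadd d (vsc s x)) z > 0) /\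
    Rabs (u (reflect N (vadd d (vsc s x)) z) - u (reflect N d z)) < eps.
Proof. intros Hd Hx Sz Hdd eps He.
  set (dd := dot N d d). set (dx := dot N d x). set (xx := dot N x x). set (dz := dot N d z). set (xz := dot N x z).
  assert (E1: forall s, dot N (vadd d (vsc s x)) (vadd d (vsc s x)) = dd + 2*s*dx + s*s*xx).
  { intros. rewrite dot_add_l, !dot_add_r, !dot_sc_l, !dot_sc_r. unfold dd, dx, xx. rewrite (dot_comm N x d). ring. }
  assert (E2: forall s, dot N (vadd d (vsc s x)) z = dz + s*xz).
  { intros. rewrite dot_add_l, dot_sc_l. auto. }
  assert (C1: continuity_pt (fun s => dd + 2*s*dx + s*s*xx) 0) by (apply cpt_of_ex_derive; auto_derive; auto).
  destruct (cpt_eps _ _ C1 (Rabs dd / 2)) as [d1 [Hd1 H1]]. pose proof (Rabs_pos_lt dd Hdd); lra.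
  assert (C2: continuity_pt (fun s => dz + s*xz) 0) by (apply cpt_of_ex_derive; auto_derive; auto).
  destruct (Rle_lt_dec dz 0) as [Hdz|Hdz].
  2:{ destruct (cpt_eps _ _ C2 (dz / 2)) as [d2 [Hd2 H2]]. lra.
      set (c := fun s => reflect N (vadd d (vsc s x)) z).
      assert (Sc0: sphere N (c 0)). { unfold c. rewrite vadd_sc0. apply sphere_reflect; auto. }
      destruct (u_cont_curve N u Hc c 0 Sc0) with (eps := eps) as [d3 [Hd3 H3]]; auto.
      { intros i Hi. unfold c, reflect. destruct (Nat.ltb_spec i N); [|lia].
        apply continuity_pt_ext with (f := fun s => z i - 2 * (dz + s*xz) / (dd + 2*s*dx + s*s*xx) * (d i + s * x i)).
        intros s. rewrite E1, E2. unfold vadd, vsc. auto.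
        apply cpt_of_ex_derive. auto_derive. replace (dd + 2 * 0 * dx + 0 * 0 * xx) with dd by ring. auto. }
      exists (Rmin d1 (Rmin d2 d3)). split. apply Rmin_pos; auto; apply Rmin_pos; auto.
      intros s Hs. assert (Hs1: Rabs (s - 0) < d1). rewrite Rminus_0_r. eapply Rlt_le_trans; [apply Hs| apply Rmin_l].
      assert (Hs2: Rabs (s - 0) < d2). rewrite Rminus_0_r. eapply Rlt_le_trans; [apply Hs|]. eapply Rle_trans; [apply Rmin_r|apply Rmin_l].
      assert (Hs3: Rabs (s - 0) < d3). rewrite Rminus_0_r. eapply Rlt_le_trans; [apply Hs|]. eapply Rle_trans; [apply Rmin_r|apply Rmin_r].
      pose proof (H1 s Hs1) as K1. pose proof (H2 s Hs2) as K2. simpl in K1, K2.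
      assert (NZ: dot N (vadd d (vsc s x)) (vadd d (vsc s x)) <> 0).
      { rewrite E1. intro Z. rewrite Z in K1. replace (0 - (dd + 2 * 0 * dx + 0 * 0 * xx)) with (- dd) in K1 by ring.
        rewrite Rabs_Ropp in K1. pose proof (Rabs_pos_lt dd Hdd). lra. }
      split; auto. split. intros _. rewrite E2. replace (dz + 0 * xz) with dz in K2 by ring.
      apply Rabs_def2 in K2. lra.
      pose proof (H3 s Hs3) as K3. unfold c in K3. rewrite vadd_sc0 in K3. apply K3.
      apply sphere_reflect; auto. apply inRN_add; auto. apply inRN_sc; auto. }
  set (c := fun s => reflect N (vadd d (vsc s x)) z).
  assert (Sc0: sphere N (c 0)). { unfold c. rewrite vadd_sc0. apply sphere_reflect; auto. }
  destruct (u_cont_curve N u Hc c 0 Sc0) with (eps := eps) as [d3 [Hd3 H3]]; auto.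
  { intros i Hi. unfold c, reflect. destruct (Nat.ltb_spec i N); [|lia].
    apply continuity_pt_ext with (f := fun s => z i - 2 * (dz + s*xz) / (dd + 2*s*dx + s*s*xx) * (d i + s * x i)).
    intros s. rewrite E1, E2. unfold vadd, vsc. auto.
    apply cpt_of_ex_derive. auto_derive. replace (dd + 2 * 0 * dx + 0 * 0 * xx) with dd by ring. auto. }
  exists (Rmin d1 d3). split. apply Rmin_pos; auto.
  intros s Hs. assert (Hs1: Rabs (s - 0) < d1). rewrite Rminus_0_r. eapply Rlt_le_trans; [apply Hs| apply Rmin_l].
  assert (Hs3: Rabs (s - 0) < d3). rewrite Rminus_0_r. eapply Rlt_le_trans; [apply Hs| apply Rmin_r].
  pose proof (H1 s Hs1) as K1. simpl in K1.
  assert (NZ: dot N (vadd d (vsc s x)) (vadd d (vsc s x)) <> 0).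
  { rewrite E1. intro Z. rewrite Z in K1. replace (0 - (dd + 2 * 0 * dx + 0 * 0 * xx)) with (- dd) in K1 by ring.
    rewrite Rabs_Ropp in K1. pose proof (Rabs_pos_lt dd Hdd). lra. }
  split; auto. split. intros Hc'. exfalso. unfold dz in *. lra.
  pose proof (H3 s Hs3) as K3. unfold c in K3. rewrite vadd_sc0 in K3. apply K3.
  apply sphere_reflect; auto. apply inRN_add; auto. apply inRN_sc; auto. Qed.

Definition PP N (u : vec -> R) a := forall x, sphere N x -> dot N a x > 0 -> u x >= u (reflect N a x).

Lemma dot_zero_l N x : dot N (fun _ => 0) x = 0.
Proof. unfold dot. rewrite (sumN_ext _ _ (fun _ => 0)). apply sumN_zero. intros; ring. Qed.

Lemma PP_zero N u : PP N u (fun _ => 0).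
Proof. intros x _ H. rewrite dot_zero_l in H. lra. Qed.

Lemma PP_of_zero N u a : inRN N a -> dot N a a = 0 -> PP N u a.
Proof. intros Ha H. rewrite (dot_zero_vec N a Ha H). apply PP_zero. Qed.

Lemma PP_scale N u c a : c > 0 -> PP N u a -> PP N u (vsc c a).
Proof. intros Hc H x Sx Hx. rewrite reflect_scale by lra. apply H; auto. rewrite dot_sc_l in Hx.
  destruct (Rle_lt_dec (dot N a x) 0); auto. nra. Qed.

Lemma vsc_vsc c d a : vsc c (vsc d a) = vsc (c*d) a.
Proof. apply functional_extensionality; intros; unfold vsc; ring. Qed.
Lemma vsc_1 a : vsc 1 a = a.
Proof. apply functional_extensionality; intros; unfold vsc; ring. Qed.

Lemma PP_scale_inv N u c a : c > 0 -> PP N u (vsc c a) -> PP N u a.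
Proof. intros Hc H. rewrite <- (vsc_1 a). replace 1 with (/c * c) by (field; lra).
  rewrite <- vsc_vsc. apply PP_scale; auto. apply Rinv_0_lt_compat; lra. Qed.

Lemma PP_dich N u (Hsep : separable N u) a : inRN N a -> PP N u a \/ PP N u (vsc (-1) a).
Proof. intros Ha. destruct (Req_dec (dot N a a) 0) as [E|E]. left; apply PP_of_zero; auto.
  destruct (Hsep a Ha E) as [H|H]. left; exact H. right. intros x Sx Hx.
  rewrite reflect_opp. rewrite dot_sc_l in Hx.
  assert (S2: sphere N (reflect N a x)) by (apply sphere_reflect; auto).
  pose proof (H _ S2) as T. destruct Sx as [Hx0 _].
  rewrite dot_reflect_a in T by auto. rewrite reflect_invol in T by auto. apply Rle_ge. apply T. lra. Qed.

Lemma notPP_wit N u a : ~ PP N u a -> exists z, sphere N z /\ dot N a z > 0 /\ u z < u (reflect N a z).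
Proof. intros H. apply NNPP. intro C. apply H. intros x Sx Hx. apply Rnot_lt_ge. intro L. apply C. exists x; auto. Qed.

Lemma PP_open N u (Hc : cont_on_sphere N u) (Hsep : separable N u) a x : inRN N a -> inRN N x ->
  ~ PP N u (vsc (-1) a) -> exists del, del > 0 /\ forall s, Rabs s < del -> PP N u (vadd a (vsc s x)).
Proof. intros Ha Hx H. destruct (notPP_wit _ _ _ H) as [z [Sz [Hz1 Hz2]]].
  assert (Hd : inRN N (vsc (-1) a)) by (apply inRN_sc; auto).
  assert (Hdd: dot N (vsc (-1) a) (vsc (-1) a) <> 0).
  { intro E. apply H. apply PP_of_zero; auto. }
  destruct (RC N u Hc (vsc (-1) a) (vsc (-1) x) z Hd (inRN_sc _ _ _ Hx) Sz Hdd (u (reflect N (vsc (-1) a) z) - u z)) as [del [Hdel Hr]].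
  lra. exists del; split; auto. intros s Hs. destruct (Hr s Hs) as [R1 [R2 R3]].
  assert (EQ: vadd (vsc (-1) a) (vsc s (vsc (-1) x)) = vsc (-1) (vadd a (vsc s x))).
  { apply functional_extensionality; intros; unfold vadd, vsc; ring. }
  rewrite EQ in R1, R2, R3.
  destruct (PP_dich N u Hsep (vadd a (vsc s x))) as [P|P]; auto. apply inRN_add; auto; apply inRN_sc; auto.
  exfalso. specialize (R2 Hz1). pose proof (P z Sz R2). apply Rabs_def2 in R3. lra. Qed.

Lemma PP_closed N u (Hc : cont_on_sphere N u) v a : inRN N v -> inRN N a ->
  (forall s, s > 0 -> PP N u (vadd v (vsc s a))) -> PP N u v.
Proof. intros Hv Ha H. destruct (Req_dec (dot N v v) 0) as [E|E]. apply PP_of_zero; auto.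
  apply NNPP. intro C. destruct (notPP_wit _ _ _ C) as [z [Sz [Hz1 Hz2]]].
  destruct (RC N u Hc v a z Hv Ha Sz E (u (reflect N v z) - u z)) as [del [Hdel Hr]]. lra.
  destruct (Hr (del/2)) as [R1 [R2 R3]]. rewrite Rabs_right; lra.
  pose proof (H (del/2) ltac:(lra) z Sz (R2 Hz1)). apply Rabs_def2 in R3. lra. Qed.


Lemma lub_approx (E : R -> Prop) m eps : is_lub E m -> eps > 0 -> exists t, E t /\ t > m - eps.
Proof. intros [Hub Hl] He. apply NNPP; intro C. assert (is_upper_bound E (m - eps)).
  { intros t Et. apply Rnot_lt_le. intro L. apply C. exists t; split; auto. }
  specialize (Hl _ H). lra. Qed.

Definition trunc (k : nat) (v : vec) : vec := fun i => if Nat.ltb i k then v i else 0.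

Lemma exists_e N u (Hc : cont_on_sphere N u) (Hsep : separable N u)
  (Hadd : forall a b, inRN N a -> inRN N b -> PP N u a -> PP N u b -> PP N u (vadd a b))
  a (Ha : inRN N a) (HPa : ~ PP N u (vsc (-1) a)) :
  exists e, inRN N e /\ dot N a e = 1 /\ forall v, inRN N v -> dot N v e >= 0 -> PP N u v.
Proof.
  assert (PA: PP N u a) by (destruct (PP_dich N u Hsep a Ha); tauto).
  set (E := fun v t => PP N u (vadd v (vsc (-t) a))).
  assert (F1: forall v t t', inRN N v -> E v t -> t' <= t -> E v t').
  { intros v t t' Hv Et Ht. unfold E in *. destruct (Req_dec t t'). subst; auto.
    replace (vadd v (vsc (-t') a)) with (vadd (vadd v (vsc (-t) a)) (vsc (t - t') a)) by veq.
    apply Hadd; auto. apply inRN_add; auto; apply inRN_sc; auto. apply inRN_sc; auto.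
    apply PP_scale; auto; lra. }
  assert (F2: forall v, inRN N v -> exists t, E v t).
  { intros v Hv. destruct (PP_open N u Hc Hsep a v Ha Hv HPa) as [d [Hd H]].
    exists (-(2/d)). unfold E. apply PP_scale_inv with (c := d/2). lra.
    replace (vsc (d / 2) (vadd v (vsc (- - (2 / d)) a))) with (vadd a (vsc (d/2) v)).
    apply H. rewrite Rabs_right; lra. apply functional_extensionality; intro; unfold vadd, vsc. field. lra. }
  assert (NPs: forall c, c > 0 -> ~ PP N u (vsc (-c) a)).
  { intros c Hc0 P. apply HPa. apply PP_scale_inv with c; auto. rewrite vsc_vsc. replace (c * -1) with (-c) by ring. auto. }
  assert (F3: forall v, inRN N v -> exists B, forall t, E v t -> t <= B).
  { intros v Hv. destruct (PP_open N u Hc Hsep a (vsc (-1) v) Ha (inRN_sc _ _ _ Hv) HPa) as [d [Hd H]].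
    exists (2/d). intros t Et. apply Rnot_lt_le. intro L.
    assert (P2: PP N u (vsc (d/2) (vadd (vsc (-1) v) (vsc (2/d) a)))).
    { replace (vsc (d / 2) (vadd (vsc (-1) v) (vsc (2 / d) a))) with (vadd a (vsc (d/2) (vsc (-1) v))).
      apply H. rewrite Rabs_right; lra. apply functional_extensionality; intro; unfold vadd, vsc. field. lra. }
    apply PP_scale_inv in P2; [|lra].
    pose proof (Hadd _ _ (inRN_add _ _ _ Hv (inRN_sc _ _ _ Ha)) (inRN_add _ _ _ (inRN_sc _ _ _ Hv) (inRN_sc _ _ _ Ha)) Et P2) as P3.
    apply (NPs (t - 2/d)). lra. replace (vsc (- (t - 2 / d)) a) with (vadd (vadd v (vsc (- t) a)) (vadd (vsc (-1) v) (vsc (2 / d) a))) by veq. auto. }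
  assert (Hl: forall v, exists m, inRN N v -> is_lub (E v) m).
  { intros v. destruct (classic (inRN N v)) as [Hv|Hv]; [|exists 0; tauto].
    destruct (F3 v Hv) as [B HB]. destruct (completeness (E v)) as [m Hm]. exists B; intros t Et; apply HB; auto.
    apply F2; auto. exists m; auto. }
  set (psi := fun v => proj1_sig (constructive_indefinite_description _ (Hl v))).
  assert (Hpsi: forall v, inRN N v -> is_lub (E v) (psi v)).
  { intros v Hv. unfold psi. destruct (constructive_indefinite_description _ (Hl v)). simpl. auto. }
  assert (ub: forall v t, inRN N v -> E v t -> t <= psi v). { intros v t Hv Et. apply (Hpsi v Hv); auto. }
  assert (lb: forall v B, inRN N v -> (forall t, E v t -> t <= B) -> psi v <= B). { intros v B Hv HB. apply (Hpsi v Hv); auto. }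
  assert (L1: forall v w, inRN N v -> inRN N w -> psi v + psi w <= psi (vadd v w)).
  { intros v w Hv Hw. apply Rnot_lt_le; intro L. set (g := psi v + psi w - psi (vadd v w)).
    destruct (lub_approx _ _ (g/2) (Hpsi v Hv)) as [t [Et Ht]]. unfold g; lra.
    destruct (lub_approx _ _ (g/2) (Hpsi w Hw)) as [t' [Et' Ht']]. unfold g; lra.
    assert (E (vadd v w) (t + t')).
    { unfold E in *. replace (vadd (vadd v w) (vsc (- (t + t')) a)) with (vadd (vadd v (vsc (-t) a)) (vadd w (vsc (-t') a))) by veq.
      apply Hadd; auto; apply inRN_add; auto; apply inRN_sc; auto. }
    pose proof (ub _ _ (inRN_add _ _ _ Hv Hw) H). unfold g in *. lra. }
  assert (L2: forall v, inRN N v -> psi v + psi (vsc (-1) v) <= 0).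
  { intros v Hv. apply Rnot_lt_le; intro L. set (g := psi v + psi (vsc (-1) v)).
    destruct (lub_approx _ _ (g/2) (Hpsi v Hv)) as [t [Et Ht]]. unfold g; lra.
    destruct (lub_approx _ _ (g/2) (Hpsi _ (inRN_sc N (-1) v Hv))) as [t' [Et' Ht']]. unfold g; lra.
    apply (NPs (t + t')). unfold g in *; lra. unfold E in *.
    replace (vsc (- (t + t')) a) with (vadd (vadd v (vsc (-t) a)) (vadd (vsc (-1) v) (vsc (-t') a))) by veq.
    apply Hadd; auto; apply inRN_add; auto; apply inRN_sc; auto; apply inRN_sc; auto. }
  assert (L3: forall v, inRN N v -> - psi v <= psi (vsc (-1) v)).
  { intros v Hv. apply Rnot_lt_le; intro L. set (t := (psi v - psi (vsc (-1) v)) / 2).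
    assert (~ E v t). { intro Et. pose proof (ub _ _ Hv Et). unfold t in *. lra. }
    assert (E (vsc (-1) v) (-t)).
    { unfold E in *. destruct (PP_dich N u Hsep (vadd v (vsc (- t) a))) as [P|P]. apply inRN_add; auto; apply inRN_sc; auto.
      contradiction. replace (vadd (vsc (-1) v) (vsc (- - t) a)) with (vsc (-1) (vadd v (vsc (- t) a))) by veq. auto. }
    pose proof (ub _ _ (inRN_sc _ _ _ Hv) H0). unfold t in *. lra. }
  assert (NEG: forall v, inRN N v -> psi (vsc (-1) v) = - psi v).
  { intros v Hv. pose proof (L2 v Hv). pose proof (L3 v Hv). lra. }
  assert (ADD: forall v w, inRN N v -> inRN N w -> psi (vadd v w) = psi v + psi w).
  { intros v w Hv Hw. pose proof (L1 v w Hv Hw). pose proof (L1 _ _ (inRN_sc _ (-1) _ Hv) (inRN_sc _ (-1) _ Hw)).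
    replace (vadd (vsc (-1) v) (vsc (-1) w)) with (vsc (-1) (vadd v w)) in H0 by veq.
    rewrite !NEG in H0 by (auto; apply inRN_add; auto). lra. }
  assert (SC1: forall c v, c > 0 -> inRN N v -> psi (vsc c v) <= c * psi v).
  { intros c v Hc0 Hv. apply lb. apply inRN_sc; auto. intros s Es.
    assert (E v (s / c)). { unfold E in *. apply PP_scale_inv with c; auto.
      replace (vsc c (vadd v (vsc (- (s / c)) a))) with (vadd (vsc c v) (vsc (- s) a)); auto.
      apply functional_extensionality; intro; unfold vadd, vsc. field. lra. }
    pose proof (ub _ _ Hv H). apply Rmult_le_compat_l with (r := c) in H0; [|lra].
    replace (c * (s/c)) with s in H0 by (field; lra). auto. }
  assert (SC: forall c v, inRN N v -> psi (vsc c v) = c * psi v).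
  { intros c v Hv. destruct (Rlt_le_dec 0 c) as [Hc0|Hc0].
    - pose proof (SC1 c v Hc0 Hv). pose proof (SC1 (/c) (vsc c v) (Rinv_0_lt_compat _ Hc0) (inRN_sc _ _ _ Hv)).
      rewrite vsc_vsc in H0. replace (/c * c) with 1 in H0 by (field; lra). rewrite vsc_1 in H0.
      apply Rmult_le_compat_l with (r := c) in H0; [|lra]. replace (c * (/c * psi (vsc c v))) with (psi (vsc c v)) in H0 by (field; lra). lra.
    - destruct (Req_dec c 0).
      + subst. pose proof (ADD (vsc 0 v) (vsc 0 v) (inRN_sc _ _ _ Hv) (inRN_sc _ _ _ Hv)).
        replace (vadd (vsc 0 v) (vsc 0 v)) with (vsc 0 v) in H by veq. lra.
      + pose proof (SC1 (-c) v ltac:(lra) Hv). pose proof (SC1 (-c) (vsc (-1) v) ltac:(lra) (inRN_sc _ _ _ Hv)).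
        rewrite vsc_vsc in H1. replace (- c * -1) with c in H1 by ring.
        rewrite NEG in H1 by auto. replace (vsc (- c) v) with (vsc (-1) (vsc c v)) in H0 by veq.
        rewrite NEG in H0 by (apply inRN_sc; auto). lra. }
  set (e := fun i => if Nat.ltb i N then psi (ev i) else 0).
  assert (LIN: forall v, inRN N v -> psi v = dot N v e).
  { intros v Hv. assert (forall k, (k <= N)%nat -> psi (trunc k v) = sumN k (fun i => v i * e i)).
    { induction k; intros Hk.
      - simpl. replace (trunc 0 v) with (vsc 0 v). rewrite SC; auto; ring.
        apply functional_extensionality; intro; unfold trunc, vsc. destruct (Nat.ltb_spec x 0); [lia|ring].
      - assert (Ht: inRN N (trunc k v)). { intros i Hi; unfold trunc. destruct (Nat.ltb_spec i k); auto; lia. }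
        replace (trunc (S k) v) with (vadd (trunc k v) (vsc (v k) (ev k))).
        rewrite ADD, SC, IHk by (auto; try lia; try apply inRN_sc; apply inRN_ev; lia). simpl. unfold e.
        destruct (Nat.ltb_spec k N); [ring|lia].
        apply functional_extensionality; intro i; unfold trunc, vadd, vsc, ev.
        destruct (Nat.ltb_spec i (S k)), (Nat.ltb_spec i k), (Nat.eqb_spec i k); subst; try lia; ring. }
    replace v with (trunc N v) at 1. rewrite H by lia. unfold dot; auto.
    apply functional_extensionality; intro i; unfold trunc. destruct (Nat.ltb_spec i N); auto. rewrite Hv; auto. }
  assert (PSA: psi a = 1).
  { apply Rle_antisym.
    - apply lb; auto. intros t Et. apply Rnot_lt_le; intro L. apply (NPs (t - 1)). lra. unfold E in Et.
      replace (vsc (- (t - 1)) a) with (vadd a (vsc (- t) a)) by veq. auto.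
    - apply ub; auto. unfold E. replace (vadd _ _) with (fun _ : nat => 0) by veq. apply PP_zero. }
  exists e. split. intros i Hi; unfold e. destruct (Nat.ltb_spec i N); auto; lia.
  split. rewrite <- LIN; auto.
  intros v Hv Hve. rewrite <- LIN in Hve by auto. apply (PP_closed N u Hc v a Hv Ha). intros s Hs.
  destruct (lub_approx _ _ s (Hpsi v Hv) Hs) as [t [Et Ht]].
  assert (E v (-s)) by (apply F1 with t; auto; lra). unfold E in H.
  replace (vsc (- - s) a) with (vsc s a) in H by veq. auto.
Qed.

Lemma cpt_cont (f : R -> R) x : continuity_pt f x -> continuous f x.
Proof. intros H. apply continuity_pt_filterlim in H. exact H. Qed.

Lemma eps_cpt (f : R -> R) x : (forall eps, eps > 0 -> exists del, del > 0 /\ forall y, Rabs (y - x) < del -> Rabs (f y - f x) < eps) -> continuity_pt f x.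
Proof. intros H eps He. destruct (H eps He) as [d [Hd H']]. exists d; split; auto. intros y [_ Hy]. apply H'. exact Hy. Qed.

Lemma exR (f : R -> R) a b : (forall x, continuity_pt f x) -> ex_RInt f a b.
Proof. intros H. apply (@ex_RInt_continuous R_CompleteNormedModule). intros; apply cpt_cont; auto. Qed.

Lemma cpt_aff (f : R -> R) al be : (forall x, continuity_pt f x) -> forall x, continuity_pt (fun y => f (al * y + be)) x.
Proof. intros H x. apply continuity_pt_comp with (f1 := fun y => al * y + be) (f2 := f).
  apply cpt_of_ex_derive; auto_derive; auto. apply H. Qed.

Lemma RInt_scal_R (g : R -> R) a b c : ex_RInt g a b -> RInt (fun y => c * g y) a b = c * RInt g a b.
Proof. intros H. exact (RInt_scal g a b c H). Qed.
Lemma RInt_plus_R (g h : R -> R) a b : ex_RInt g a b -> ex_RInt h a b -> RInt (fun y => g y + h y) a b = RInt g a b + RInt h a b.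
Proof. intros H1 H2. exact (RInt_plus g h a b H1 H2). Qed.

Lemma RInt_periodic (f : R -> R) T t : (forall x, continuity_pt f x) -> (forall x, f (x + T) = f x) ->
  RInt f t (t + T) = RInt f 0 T.
Proof. intros Hc Hp.
  rewrite <- (RInt_Chasles f t 0 (t + T)) by (apply exR; auto).
  rewrite <- (RInt_Chasles f 0 T (t + T)) by (apply exR; auto).
  assert (E: RInt f T (t + T) = RInt f 0 t).
  { assert (H1: RInt (fun y => scal 1 (f (1 * y + T))) 0 t = RInt f (1 * 0 + T) (1 * t + T)).
    { exact (RInt_comp_lin (V := R_CompleteNormedModule) f 1 T 0 t (exR _ _ _ Hc)). }
    replace (1 * 0 + T) with T in H1 by ring. replace (1 * t + T) with (t + T) in H1 by ring.
    rewrite <- H1. apply RInt_ext. intros. change (1 * f (1 * x + T) = f x). rewrite !Rmult_1_l. apply Hp. }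
  rewrite E. rewrite <- (opp_RInt_swap f 0 t) by (apply exR; auto).
  rewrite (plus_comm (RInt f 0 T)), plus_assoc. change (- RInt f 0 t + RInt f 0 t + RInt f 0 T = RInt f 0 T). ring. Qed.

Lemma RInt_reflect (f : R -> R) T b : (forall x, continuity_pt f x) -> (forall x, f (x + T) = f x) ->
  RInt (fun y => f (b - y)) 0 T = RInt f 0 T.
Proof. intros Hc Hp. rewrite <- (RInt_periodic f T (b - T)) by auto.
  assert (H1: RInt (fun y => scal (-1) (f (-1 * y + b))) 0 T = RInt f (-1 * 0 + b) (-1 * T + b)).
  { exact (RInt_comp_lin (V := R_CompleteNormedModule) f (-1) b 0 T (exR _ _ _ Hc)). }
  change (RInt (fun y => -1 * f (-1 * y + b)) 0 T = RInt f (-1 * 0 + b) (-1 * T + b)) in H1.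
  rewrite RInt_scal_R in H1 by (apply exR; apply cpt_aff; auto).
  replace (-1 * 0 + b) with b in H1 by ring. replace (-1 * T + b) with (b - T) in H1 by ring.
  rewrite <- (opp_RInt_swap f (b - T) b) in H1 by (apply exR; auto).
  replace (b - T + T) with b by ring.
  change (-1 * RInt (fun y => f (-1 * y + b)) 0 T = - RInt f (b - T) b) in H1.
  rewrite <- (RInt_ext (fun y => f (-1 * y + b))). lra. intros; f_equal; ring. Qed.

Lemma RInt_pos_strict (h : R -> R) a b t0 : (forall x, continuity_pt h x) -> (forall x, 0 <= h x) ->
  a < t0 < b -> h t0 > 0 -> RInt h a b > 0.
Proof. intros Hc Hn [Ha Hb] Ht.
  destruct (cpt_eps h t0 (Hc t0) (h t0 / 2)) as [d [Hd H]]. lra.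
  set (d' := Rmin (d/2) (Rmin ((t0 - a)/2) ((b - t0)/2))).
  assert (D1: d' <= d/2) by apply Rmin_l.
  assert (D2: d' <= (t0-a)/2) by (eapply Rle_trans; [apply Rmin_r|apply Rmin_l]).
  assert (D3: d' <= (b-t0)/2) by (eapply Rle_trans; [apply Rmin_r|apply Rmin_r]).
  assert (D0: d' > 0). { unfold d'. apply Rmin_pos. lra. apply Rmin_pos; lra. }
  rewrite <- (RInt_Chasles h a (t0 - d') b) by (apply exR; auto).
  rewrite <- (RInt_Chasles h (t0 - d') (t0 + d') b) by (apply exR; auto).
  assert (0 <= RInt h a (t0 - d')) by (apply RInt_ge_0; [lra|apply exR; auto|intros; auto]).
  assert (0 <= RInt h (t0 + d') b) by (apply RInt_ge_0; [lra|apply exR; auto|intros; auto]).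
  assert (0 < RInt h (t0 - d') (t0 + d')).
  { apply RInt_gt_0. lra. intros x Hx. specialize (H x). apply Rabs_def2 in H. lra. apply Rabs_def1; lra.
    intros; apply cpt_cont; auto. }
  change (RInt h a (t0 - d') + (RInt h (t0 - d') (t0 + d') + RInt h (t0 + d') b) > 0). lra. Qed.

Lemma polar x y : x^2 + y^2 = 1 -> exists b, cos b = x /\ sin b = y.
Proof. intros H. assert (Hx: -1 <= x <= 1). { split; nra. }
  assert (Hs: sqrt (1 - x^2) = Rabs y). { replace (1 - x^2) with (y^2) by lra. rewrite <- sqrt_Rsqr_abs. unfold Rsqr; f_equal; ring. }
  destruct (Rle_lt_dec 0 y).
  - exists (acos x). rewrite cos_acos by auto. rewrite sin_acos by auto. split; auto.
    replace (1 - x²) with (1 - x^2) by (unfold Rsqr; ring). rewrite Hs. apply Rabs_right; lra.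
  - exists (- acos x). rewrite cos_neg, sin_neg, cos_acos by auto. rewrite sin_acos by auto. split; auto.
    replace (1 - x²) with (1 - x^2) by (unfold Rsqr; ring). rewrite Hs. rewrite Rabs_left; lra. Qed.

Definition gam (p e1 e2 : vec) (r th : R) : vec := fun i => p i + r * cos th * e1 i + r * sin th * e2 i.

Definition frame N (p e1 e2 : vec) r := inRN N p /\ inRN N e1 /\ inRN N e2 /\ dot N e1 e1 = 1 /\ dot N e2 e2 = 1 /\
  dot N e1 e2 = 0 /\ dot N p e1 = 0 /\ dot N p e2 = 0 /\ dot N p p + r^2 = 1 /\ r > 0.

Lemma gam_eq p e1 e2 r th : gam p e1 e2 r th = vadd p (vadd (vsc (r * cos th) e1) (vsc (r * sin th) e2)).
Proof. apply functional_extensionality; intro; unfold gam, vadd, vsc; ring. Qed.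

Lemma dot_frame N (p e1 e2 : vec) a1 a2 b1 b2 : dot N e1 e1 = 1 -> dot N e2 e2 = 1 -> dot N e1 e2 = 0 ->
  dot N (vadd (vsc a1 e1) (vsc a2 e2)) (vadd (vsc b1 e1) (vsc b2 e2)) = a1 * b1 + a2 * b2.
Proof. intros H1 H2 H3. rewrite dot_add_l, !dot_add_r, !dot_sc_l, !dot_sc_r. rewrite (dot_comm N e2 e1). rewrite H1, H2, H3. ring. Qed.

Lemma gam_inRN N p e1 e2 r th : frame N p e1 e2 r -> inRN N (gam p e1 e2 r th).
Proof. intros [Hp [He1 [He2 _]]]. rewrite gam_eq. apply inRN_add; auto. apply inRN_add; apply inRN_sc; auto. Qed.

Lemma gam_sphere N p e1 e2 r th : frame N p e1 e2 r -> sphere N (gam p e1 e2 r th).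
Proof. intros F. split. apply gam_inRN; auto. destruct F as [Hp [He1 [He2 [H11 [H22 [H12 [Hp1 [Hp2 [Hpp Hr]]]]]]]]].
  rewrite gam_eq. rewrite !dot_add_l, !dot_add_r, !dot_sc_l, !dot_sc_r.
  rewrite (dot_comm N e1 p), (dot_comm N e2 p), (dot_comm N e2 e1), Hp1, Hp2, H11, H22, H12. pose proof (sin2_cos2 th). unfold Rsqr in H. nra. Qed.

Lemma dot_d_gam N p e1 e2 r th q1 q2 : frame N p e1 e2 r ->
  dot N (vadd (vsc q1 e1) (vsc q2 e2)) (gam p e1 e2 r th) = r * (q1 * cos th + q2 * sin th).
Proof. intros F. destruct F as [Hp [He1 [He2 [H11 [H22 [H12 [Hp1 [Hp2 [Hpp Hr]]]]]]]]].
  rewrite gam_eq, dot_add_r, dot_frame by auto. rewrite dot_add_l, !dot_sc_l. rewrite (dot_comm N e1 p), (dot_comm N e2 p), Hp1, Hp2. ring. Qed.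

Lemma refl_gam N p e1 e2 r th q1 q2 b : frame N p e1 e2 r -> q1^2 + q2^2 <> 0 ->
  cos b = (q2^2 - q1^2) / (q1^2 + q2^2) -> sin b = - 2 * q1 * q2 / (q1^2 + q2^2) ->
  reflect N (vadd (vsc q1 e1) (vsc q2 e2)) (gam p e1 e2 r th) = gam p e1 e2 r (b - th).
Proof. intros F HQ Hc Hs. pose proof F as F'. destruct F' as [Hp [He1 [He2 [H11 [H22 [H12 [Hp1 [Hp2 [Hpp Hr]]]]]]]]].
  rewrite reflect_eq. 2:{ apply inRN_add; apply inRN_sc; auto. } 2:{ apply gam_inRN; auto. }
  rewrite dot_d_gam by auto. rewrite dot_frame by auto.
  apply functional_extensionality; intro i. unfold vsub, vsc, vadd, gam. rewrite cos_minus, sin_minus, Hc, Hs.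
  field. replace (q1 * q1 + q2 * q2) with (q1^2+q2^2) by ring. auto. Qed.

Lemma gam_period p e1 e2 r th : gam p e1 e2 r (th + 2 * PI) = gam p e1 e2 r th.
Proof. unfold gam. rewrite cos_plus, sin_plus, cos_2PI, sin_2PI. apply functional_extensionality; intro; ring. Qed.

Lemma g_cpt N u (Hc : cont_on_sphere N u) p e1 e2 r : frame N p e1 e2 r ->
  forall th, continuity_pt (fun t => u (gam p e1 e2 r t)) th.
Proof. intros F th. apply eps_cpt. intros eps He.
  destruct (u_cont_curve N u Hc (gam p e1 e2 r) th (gam_sphere N p e1 e2 r th F)) with (eps := eps) as [d [Hd H]]; auto.
  intros i Hi. unfold gam. apply cpt_of_ex_derive; auto_derive; auto.
  exists d; split; auto. intros y Hy. apply H; auto. apply gam_sphere; auto. Qed.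

Ltac toR := match goal with |- ?a = ?b => change (@eq R a b) end.

Lemma RInt_ext_R (f g : R -> R) a b : (forall x, f x = g x) -> RInt f a b = RInt g a b.
Proof. intros H. apply RInt_ext. intros; apply H. Qed.

Lemma cpt_mult' (f g : R -> R) x : continuity_pt f x -> continuity_pt g x -> continuity_pt (fun t => f t * g t) x.
Proof. intros. apply continuity_pt_ext with (f := mult_fct f g). intros; reflexivity. apply continuity_pt_mult; auto. Qed.
Lemma cpt_minus' (f g : R -> R) x : continuity_pt f x -> continuity_pt g x -> continuity_pt (fun t => f t - g t) x.
Proof. intros. apply continuity_pt_ext with (f := minus_fct f g). intros; reflexivity. apply continuity_pt_minus; auto. Qed.
Lemma cpt_plus' (f g : R -> R) x : continuity_pt f x -> continuity_pt g x -> continuity_pt (fun t => f t + g t) x.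
Proof. intros. apply continuity_pt_ext with (f := plus_fct f g). intros; reflexivity. apply continuity_pt_plus; auto. Qed.

Lemma circ_int N u (Hc : cont_on_sphere N u) p e1 e2 r q1 q2 : frame N p e1 e2 r -> q1^2 + q2^2 <> 0 ->
  PP N u (vadd (vsc q1 e1) (vsc q2 e2)) ->
  (0 <= q1 * RInt (fun th => u (gam p e1 e2 r th) * cos th) 0 (2*PI) + q2 * RInt (fun th => u (gam p e1 e2 r th) * sin th) 0 (2*PI))
  /\ ((exists th0, q1 * cos th0 + q2 * sin th0 < 0 /\
         u (gam p e1 e2 r th0) < u (reflect N (vadd (vsc q1 e1) (vsc q2 e2)) (gam p e1 e2 r th0))) ->
     0 < q1 * RInt (fun th => u (gam p e1 e2 r th) * cos th) 0 (2*PI) + q2 * RInt (fun th => u (gam p e1 e2 r th) * sin th) 0 (2*PI)).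
Proof.
  intros F HQ HP.
  set (g := fun t => u (gam p e1 e2 r t)).
  set (d := vadd (vsc q1 e1) (vsc q2 e2)) in *.
  assert (Gc: forall t, continuity_pt g t) by (intros; apply (g_cpt N u Hc p e1 e2 r F)).
  assert (Gp: forall t, g (t + 2*PI) = g t) by (intros; unfold g; rewrite gam_period; auto).
  set (L := fun t => q1 * cos t + q2 * sin t).
  assert (Lc: forall t, continuity_pt L t) by (intros; apply cpt_of_ex_derive; unfold L; auto_derive; auto).
  set (Fn := fun t => g t * L t).
  assert (Fc: forall t, continuity_pt Fn t) by (intros; apply cpt_mult'; auto).
  assert (Fp: forall t, Fn (t + 2*PI) = Fn t) by (intros; unfold Fn, L; rewrite Gp, cos_plus, sin_plus, cos_2PI, sin_2PI; ring).
  assert (Ccos: forall t, continuity_pt cos t) by (intros; apply cpt_of_ex_derive; auto_derive; auto).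
  assert (Csin: forall t, continuity_pt sin t) by (intros; apply cpt_of_ex_derive; auto_derive; auto).
  assert (EI: RInt Fn 0 (2*PI) = q1 * RInt (fun th => g th * cos th) 0 (2*PI) + q2 * RInt (fun th => g th * sin th) 0 (2*PI)).
  { transitivity (RInt (fun t => q1 * (g t * cos t) + q2 * (g t * sin t)) 0 (2*PI)).
    apply RInt_ext_R; intros; unfold Fn, L; ring.
    assert (Cq: forall c t, continuity_pt (fun _ : R => c) t) by (intros; apply cpt_of_ex_derive; auto_derive; auto).
    assert (C1: forall t, continuity_pt (fun t => g t * cos t) t) by (intros; apply cpt_mult'; auto).
    assert (C2: forall t, continuity_pt (fun t => g t * sin t) t) by (intros; apply cpt_mult'; auto).
    rewrite (RInt_plus_R (fun t => q1 * (g t * cos t)) (fun t => q2 * (g t * sin t))).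
    rewrite (RInt_scal_R (fun t => g t * cos t)), (RInt_scal_R (fun t => g t * sin t)). reflexivity.
    all: apply exR; intros; auto; apply cpt_mult'; auto. }
  assert (HQpos: 0 < q1^2 + q2^2) by (assert (0 <= q1^2) by apply pow2_ge_0; assert (0 <= q2^2) by apply pow2_ge_0; lra).
  destruct (polar ((q2^2 - q1^2)/(q1^2+q2^2)) (-2*q1*q2/(q1^2+q2^2))) as [b [Hb1 Hb2]].
  { field_simplify_eq; auto. }
  assert (RF: forall t, reflect N d (gam p e1 e2 r t) = gam p e1 e2 r (b - t)).
  { intros. unfold d. apply refl_gam; auto. }
  assert (LR: forall t, L (b - t) = - L t).
  { intros. unfold L. rewrite cos_minus, sin_minus, Hb1, Hb2. field. auto. }
  assert (Key: RInt (fun t => Fn (b - t)) 0 (2*PI) = RInt Fn 0 (2*PI)) by (apply RInt_reflect; auto).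
  set (H := fun t => (g t - g (b - t)) * L t).
  assert (Gbc: forall t, continuity_pt (fun t => g (b - t)) t).
  { intros. apply continuity_pt_ext with (f := fun y => g (-1 * y + b)). intros; f_equal; ring. apply cpt_aff; auto. }
  assert (Hcc: forall t, continuity_pt H t) by (intros; unfold H; apply cpt_mult'; auto; apply cpt_minus'; auto).
  assert (Fbc: forall t, continuity_pt (fun t => Fn (b - t)) t).
  { intros. apply continuity_pt_ext with (f := fun y => Fn (-1 * y + b)). intros; f_equal; ring. apply cpt_aff; auto. }
  assert (HI: RInt H 0 (2*PI) = 2 * RInt Fn 0 (2*PI)).
  { transitivity (RInt (fun t => Fn t + Fn (b - t)) 0 (2*PI)).
    apply RInt_ext_R; intros; unfold H, Fn. rewrite LR. ring.
    rewrite RInt_plus_R by (apply exR; auto). rewrite Key. toR. ring. }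
  assert (Hnn: forall t, 0 <= H t).
  { intros t. unfold H. destruct (Rtotal_order (L t) 0) as [Lt|[Le|Gt]].
    - assert (dot N d (gam p e1 e2 r (b - t)) > 0).
      { unfold d. rewrite dot_d_gam by auto. fold (L (b - t)). rewrite LR. destruct F as [_ [_ [_ [_ [_ [_ [_ [_ [_ Hr]]]]]]]]]. nra. }
      pose proof (HP _ (gam_sphere N p e1 e2 r (b - t) F) H0). rewrite RF in H1.
      replace (b - (b - t)) with t in H1 by ring. fold (g t) (g (b - t)) in H1. nra.
    - rewrite Le. lra.
    - assert (dot N d (gam p e1 e2 r t) > 0).
      { unfold d. rewrite dot_d_gam by auto. fold (L t). destruct F as [_ [_ [_ [_ [_ [_ [_ [_ [_ Hr]]]]]]]]]. nra. }
      pose proof (HP _ (gam_sphere N p e1 e2 r t F) H0). rewrite RF in H1. fold (g t) (g (b - t)) in H1. nra. }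
  pose proof PI_RGT_0 as HPI.
  change ((0 <= q1 * RInt (fun th => g th * cos th) 0 (2*PI) + q2 * RInt (fun th => g th * sin th) 0 (2*PI)) /\
   ((exists th0, q1 * cos th0 + q2 * sin th0 < 0 /\ g th0 < u (reflect N d (gam p e1 e2 r th0))) ->
     0 < q1 * RInt (fun th => g th * cos th) 0 (2*PI) + q2 * RInt (fun th => g th * sin th) 0 (2*PI))).
  split.
  - rewrite <- EI. assert (0 <= RInt H 0 (2*PI)). apply RInt_ge_0. lra. apply exR; auto. intros; auto. lra.
  - intros [th0 [Hl Hu]]. rewrite <- EI.
    assert (Hp: forall t, H (t + 2*PI) = H t).
    { intros. unfold H, L. replace (b - (t + 2*PI)) with ((b - t - 2*PI)) by ring. rewrite Gp.
      rewrite <- (Gp (b - t - 2*PI)). replace (b - t - 2 * PI + 2 * PI) with (b - t) by ring.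
      rewrite cos_plus, sin_plus, cos_2PI, sin_2PI. ring. }
    assert (0 < RInt H 0 (2*PI)).
    { rewrite <- (RInt_periodic H (2*PI) (th0 - PI)) by auto.
      apply (RInt_pos_strict H _ _ th0); auto. lra.
      unfold H. rewrite RF in Hu. fold (g th0) (g (b - th0)) in Hu. fold (L th0) in Hl. nra. }
    lra.
Qed.


Lemma q_nz1 x y : x <> 0 -> x^2 + y^2 <> 0.
Proof. intros H E. pose proof (pow2_ge_0 y). assert (0 < x^2) by (simpl; rewrite Rmult_1_r; apply Rsqr_pos_lt; auto). lra. Qed.
Lemma q_nz2 x y : y <> 0 -> x^2 + y^2 <> 0.
Proof. intros H E. pose proof (pow2_ge_0 x). assert (0 < y^2) by (simpl; rewrite Rmult_1_r; apply Rsqr_pos_lt; auto). lra. Qed.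
Lemma PP_add N u (Hc : cont_on_sphere N u) (Hsep : separable N u) a b : inRN N a -> inRN N b ->
  PP N u a -> PP N u b -> PP N u (vadd a b).
Proof.
  intros Ha Hb PA PB. apply NNPP; intro C.
  destruct (notPP_wit _ _ _ C) as [z0 [Sz [Hz1 Hz2]]].
  assert (Hcin: inRN N (vadd a b)) by (apply inRN_add; auto).
  assert (PC: PP N u (vsc (-1) (vadd a b))) by (destruct (PP_dich N u Hsep _ Hcin); tauto).
  destruct (Req_dec (dot N a a) 0) as [Ea|Ea].
  { apply C. rewrite (dot_zero_vec N a Ha Ea). replace (vadd (fun _ => 0) b) with b by veq. auto. }
  assert (Haa: 0 < dot N a a) by (pose proof (dot_self_nonneg N a); lra).
  set (na := sqrt (dot N a a)).
  assert (Hna: 0 < na) by (apply sqrt_lt_R0; auto).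
  assert (Hna2: na * na = dot N a a) by (apply sqrt_sqrt; lra).
  set (e1 := vsc (1/na) a).
  assert (He1: inRN N e1) by (apply inRN_sc; auto).
  assert (H11: dot N e1 e1 = 1). { unfold e1. rewrite dot_sc_l, dot_sc_r. rewrite <- Hna2. field. lra. }
  assert (Ae: a = vsc na e1). { unfold e1. rewrite vsc_vsc. replace (na * (1/na)) with 1 by (field; lra). rewrite vsc_1; auto. }
  set (be := dot N b e1).
  set (b' := vsub b (vsc be e1)).
  assert (Hb': inRN N b') by (apply inRN_sub; auto; apply inRN_sc; auto).
  destruct (Req_dec (dot N b' b') 0) as [Eb|Eb].
  { assert (Bv: b = vsc be e1). { pose proof (dot_zero_vec N b' Hb' Eb) as Z. apply functional_extensionality; intro i.
      assert (b' i = 0) by (rewrite Z; auto). unfold b', vsub, vsc in H. unfold vsc. lra. }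
    apply C. rewrite Bv, Ae. destruct (Rtotal_order (na + be) 0) as [L|[L|L]].
    - assert (be < 0) by lra.
      replace (vadd (vsc na e1) (vsc be e1)) with (vsc ((na + be) / be) (vsc be e1)).
      apply PP_scale. apply Rdiv_neg_neg; lra. rewrite <- Bv; auto.
      apply functional_extensionality; intro; unfold vadd, vsc. field. lra.
    - replace (vadd (vsc na e1) (vsc be e1)) with (fun _ : nat => 0). apply PP_zero.
      apply functional_extensionality; intro; unfold vadd, vsc. replace be with (-na) by lra. ring.
    - replace (vadd (vsc na e1) (vsc be e1)) with (vsc ((na + be)/na) (vsc na e1)).
      apply PP_scale. apply Rdiv_lt_0_compat; lra. rewrite <- Ae; auto.
      apply functional_extensionality; intro; unfold vadd, vsc. field. lra. }
  assert (Hbb: 0 < dot N b' b') by (pose proof (dot_self_nonneg N b'); lra).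
  set (nb := sqrt (dot N b' b')).
  assert (Hnb: 0 < nb) by (apply sqrt_lt_R0; auto).
  assert (Hnb2: nb * nb = dot N b' b') by (apply sqrt_sqrt; lra).
  set (e2 := vsc (1/nb) b').
  assert (He2: inRN N e2) by (apply inRN_sc; auto).
  assert (H22: dot N e2 e2 = 1). { unfold e2. rewrite dot_sc_l, dot_sc_r. rewrite <- Hnb2. field. lra. }
  assert (H12: dot N e1 e2 = 0). { unfold e2, b'. rewrite dot_sc_r, dot_sub_r, dot_sc_r, H11. unfold be. rewrite dot_comm. ring. }
  assert (Be: b = vadd (vsc be e1) (vsc nb e2)).
  { unfold e2. rewrite vsc_vsc. replace (nb * (1/nb)) with 1 by (field; lra). rewrite vsc_1. unfold b'. veq. }
  set (z1 := dot N z0 e1). set (z2 := dot N z0 e2).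
  set (p := vsub z0 (vadd (vsc z1 e1) (vsc z2 e2))).
  destruct Sz as [Hz0 Hzz].
  assert (Hp: inRN N p) by (apply inRN_sub; auto; apply inRN_add; apply inRN_sc; auto).
  assert (Hp1: dot N p e1 = 0). { unfold p. rewrite dot_sub_l, dot_add_l, !dot_sc_l, H11, (dot_comm N e2 e1), H12. unfold z1. ring. }
  assert (Hp2: dot N p e2 = 0). { unfold p. rewrite dot_sub_l, dot_add_l, !dot_sc_l, H22, H12. unfold z2. ring. }
  assert (Cv: vadd a b = vadd (vsc (na + be) e1) (vsc nb e2)). { rewrite Ae at 1. rewrite Be. veq. }
  assert (Dz: dot N (vadd a b) z0 = (na + be) * z1 + nb * z2).
  { rewrite Cv, dot_add_l, !dot_sc_l. unfold z1, z2. rewrite (dot_comm N e1), (dot_comm N e2). ring. }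
  assert (Hr2: 0 < z1^2 + z2^2).
  { destruct (Req_dec z1 0), (Req_dec z2 0); try (pose proof (pow2_ge_0 z1); pose proof (pow2_ge_0 z2);
      assert (0 < z1^2 \/ 0 < z2^2) by (first [left; apply pow_lt; nra | right; nra | left; nra]); lra).
    }
  set (r := sqrt (z1^2 + z2^2)).
  assert (Hr: 0 < r) by (apply sqrt_lt_R0; auto).
  assert (Hrr: r * r = z1^2 + z2^2) by (apply sqrt_sqrt; lra).
  assert (Hpp: dot N p p + r^2 = 1).
  { unfold p. rewrite !dot_sub_l, !dot_sub_r, !dot_add_l, !dot_add_r, !dot_sc_l, !dot_sc_r.
    rewrite (dot_comm N e2 e1), (dot_comm N e1 z0), (dot_comm N e2 z0), H11, H22, H12. fold z1 z2.
    replace (r^2) with (r*r) by ring. rewrite Hrr, Hzz. ring. }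
  assert (F: frame N p e1 e2 r) by (repeat split; auto).
  destruct (polar (z1 / r) (z2 / r)) as [th0 [Ht1 Ht2]].
  { field_simplify_eq. replace (r^2) with (r*r) by ring. rewrite Hrr. ring. lra. }
  assert (Zg: gam p e1 e2 r th0 = z0).
  { rewrite gam_eq, Ht1, Ht2. unfold p. apply functional_extensionality; intro; unfold vadd, vsc, vsub. field. lra. }
  assert (Ka := proj1 (circ_int N u Hc p e1 e2 r na 0 F ltac:(apply q_nz1; lra) ltac:(replace (vadd (vsc na e1) (vsc 0 e2)) with a by (rewrite Ae; veq); auto))).
  assert (Kb := proj1 (circ_int N u Hc p e1 e2 r be nb F ltac:(apply q_nz2; lra) ltac:(rewrite <- Be; auto))).
  assert (Cm: vsc (-1) (vadd a b) = vadd (vsc (-(na+be)) e1) (vsc (-nb) e2)) by (rewrite Cv; veq).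
  assert (Kc := proj2 (circ_int N u Hc p e1 e2 r (-(na+be)) (-nb) F ltac:(apply q_nz2; lra) ltac:(rewrite <- Cm; auto))).
  assert (Hdot: dot N (vadd a b) z0 = r * ((na + be) * cos th0 + nb * sin th0)).
  { rewrite Dz, Ht1, Ht2. field. lra. }
  lapply Kc. intros Kc'. lra.
  exists th0. split. nra. rewrite <- Cm, Zg, reflect_opp. auto.
Qed.

Definition hh N (w : vec) : nat -> nat -> R := fun k i => (if Nat.eqb k i then 1 else 0) - 2 * w k * w i / dot N w w.

Lemma hh_orth N w : inRN N w -> orthogonal N (hh N w).
Proof. intros Hw i j Hi Hj. unfold hh. set (ww := dot N w w).
  rewrite (sumN_ext _ _ (fun k => (if Nat.eqb k i then 1 else 0) * (if Nat.eqb k j then 1 else 0)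
     + (-(2 * w i / ww)) * ((if Nat.eqb k j then 1 else 0) * w k) + (-(2 * w j / ww)) * ((if Nat.eqb k i then 1 else 0) * w k)
     + (4 * w i * w j / (ww * ww)) * (w k * w k))).
  2:{ intros k Hk. destruct (Req_dec ww 0) as [E|E]. rewrite E. unfold Rdiv. rewrite Rmult_0_l, Rinv_0. ring. field. auto. }
  rewrite !sumN_plus, !sumN_scal, !sumN_delta by auto. fold (dot N w w). fold ww.
  destruct (Req_dec ww 0) as [E|E].
  - rewrite (dot_self_zero N w E i Hi), (dot_self_zero N w E j Hj). rewrite E. unfold Rdiv. rewrite Rinv_0. ring.
  - destruct (Nat.eqb_spec i j). subst. field. auto. field. auto. Qed.

Lemma hh_apply N w y : mat_inv_apply N (hh N w) y = reflect N w y.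
Proof. apply functional_extensionality; intro i. unfold mat_inv_apply, reflect, hh. destruct (Nat.ltb_spec i N); auto.
  set (ww := dot N w w).
  rewrite (sumN_ext _ _ (fun k => (if Nat.eqb k i then 1 else 0) * y k + (-(2 * w i / ww)) * (w k * y k))).
  2:{ intros k Hk. destruct (Req_dec ww 0) as [E|E]. rewrite E. unfold Rdiv. rewrite Rinv_0. ring. field. auto. }
  rewrite sumN_plus, sumN_scal, sumN_delta by auto. fold (dot N w y). destruct (Req_dec ww 0) as [E|E].
  rewrite E. unfold Rdiv. rewrite Rinv_0. ring. field. auto. Qed.

Lemma reflect_zero N w y : inRN N y -> dot N w w = 0 -> reflect N w y = y.
Proof. intros Hy E. apply functional_extensionality; intro i. unfold reflect. rewrite E. destruct (Nat.ltb_spec i N).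
  unfold Rdiv. rewrite Rinv_0. ring. rewrite Hy; auto. Qed.

Lemma circ_eq N t : (2 <= N)%nat -> circ_pt N t = vadd (vsc (cos t) (ev (N-2))) (vsc (sin t) (ev (N-1))).
Proof. intros HN. apply functional_extensionality; intro i. unfold circ_pt, vadd, vsc, ev.
  destruct (Nat.eqb_spec i (N-2)), (Nat.eqb_spec i (N-1)); try lia; ring. Qed.

Lemma circ_sphere N t : (2 <= N)%nat -> sphere N (circ_pt N t).
Proof. intros HN. rewrite circ_eq by auto. split. apply inRN_add; apply inRN_sc; apply inRN_ev; lia.
  rewrite !dot_add_l, !dot_add_r, !dot_sc_l, !dot_sc_r, !dot_ev_r by lia. unfold ev.
  destruct (Nat.eqb_spec (N-2) (N-2)), (Nat.eqb_spec (N-1) (N-1)), (Nat.eqb_spec (N-2) (N-1)), (Nat.eqb_spec (N-1) (N-2)); try lia.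
  pose proof (sin2_cos2 t). unfold Rsqr in H. lra. Qed.

Lemma circ_last N t : (2 <= N)%nat -> circ_pt N t (N-1)%nat = sin t.
Proof. intros HN. unfold circ_pt. destruct (Nat.eqb_spec (N-1) (N-2)); try lia. rewrite Nat.eqb_refl. auto. Qed.

Lemma coord_bound N x i : sphere N x -> (i < N)%nat -> -1 <= x i <= 1.
Proof. intros Sx Hi. assert (Se: sphere N (ev i)). { split. apply inRN_ev; auto. rewrite dot_ev_r by auto. unfold ev. rewrite Nat.eqb_refl. auto. }
  pose proof (dot_sphere_le N x (ev i) Sx Se). pose proof (dot_sphere_ge N x (ev i) Sx Se). rewrite dot_ev_r in * by auto. lra. Qed.


Theorem lemma2p4 (N : nat) (u : vec -> R)
  (HN : (2 <= N)%nat)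
  (Hcont : cont_on_sphere N u)
  (Hpos : forall x, sphere N x -> u x > 0)
  (Hnc : exists x y, sphere N x /\ sphere N y /\ u x <> u y)
  (Hsep : separable N u) :
  exists (M : nat -> nat -> R) (h1 h2 : R),
    orthogonal N M /\
    -1 <= h1 <= 1 /\ -1 <= h2 <= 1 /\
    (* (i) *)
    h1 > h2 /\
    (* (ii) *)
    (forall x, sphere N x ->
       ((forall y, sphere N y -> rot N M u y <= rot N M u x) <-> x (N - 1)%nat >= h1)) /\
    (forall x, sphere N x ->
       ((forall y, sphere N y -> rot N M u x <= rot N M u y) <-> x (N - 1)%nat <= h2)) /\
    (* (iii) *)
    (forall h, -1 <= h <= 1 -> forall x y, sphere N x -> sphere N y ->
       x (N - 1)%nat = h -> y (N - 1)%nat = h -> rot N M u x = rot N M u y) /\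
    (* (iv) *)
    (forall a b, PI / 2 <= a -> a <= b -> b <= 3 * PI / 2 ->
       rot N M u (circ_pt N b) <= rot N M u (circ_pt N a)).
Proof.
  destruct Hnc as [x0 [y0 [Sx0 [Sy0 Hne]]]].
  assert (Hex: exists x y, sphere N x /\ sphere N y /\ u x > u y).
  { destruct (Rtotal_order (u x0) (u y0)) as [L|[L|L]]. exists y0, x0; auto. contradiction. exists x0, y0; auto. }
  destruct Hex as [x1 [y1 [Sx1 [Sy1 Hxy]]]].
  assert (Hne1: x1 <> y1) by (intro E; subst; lra).
  set (a := vsub x1 y1).
  assert (Ha: inRN N a) by (apply inRN_sub; [apply Sx1|apply Sy1]).
  assert (HPa: ~ PP N u (vsc (-1) a)).
  { intro P. assert (Eq: vsc (-1) a = vsub y1 x1) by (unfold a; veq).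
    rewrite Eq in P. pose proof (P y1 Sy1 (swap_pos N y1 x1 Sy1 Sx1 (not_eq_sym Hne1))) as H.
    rewrite swap_reflect in H by auto. lra. }
  destruct (exists_e N u Hcont Hsep (PP_add N u Hcont Hsep) a Ha HPa) as [e [He [Hae HPe]]].
  assert (MONO: forall x y, sphere N x -> sphere N y -> dot N x e <= dot N y e -> u x <= u y).
  { intros x y Sx Sy Hle. destruct (classic (x = y)) as [E|E]. subst; lra.
    assert (P: PP N u (vsub y x)). { apply HPe. apply inRN_sub; [apply Sy|apply Sx]. rewrite dot_sub_l. lra. }
    pose proof (P y Sy (swap_pos N y x Sy Sx (not_eq_sym E))) as H. rewrite swap_reflect in H by auto. lra. }
  assert (Hee: 0 < dot N e e).
  { destruct (Req_dec (dot N e e) 0) as [Z|Z]. rewrite (dot_zero_vec N e He Z) in Hae.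
    rewrite dot_comm, dot_zero_l in Hae. lra. pose proof (dot_self_nonneg N e). lra. }
  set (ne := sqrt (dot N e e)).
  assert (Hne0: 0 < ne) by (apply sqrt_lt_R0; auto).
  assert (Hne2: ne * ne = dot N e e) by (apply sqrt_sqrt; lra).
  set (e' := vsc (1/ne) e).
  assert (He': inRN N e') by (apply inRN_sc; auto).
  assert (Se': sphere N e'). { split; auto. unfold e'. rewrite dot_sc_l, dot_sc_r, <- Hne2. field. lra. }
  assert (MONO': forall x y, sphere N x -> sphere N y -> dot N x e' <= dot N y e' -> u x <= u y).
  { intros x y Sx Sy H. apply MONO; auto. unfold e' in H. rewrite !dot_sc_r in H.
    apply Rmult_le_reg_l with (1/ne). apply Rdiv_lt_0_compat; lra. auto. }
  set (E := ev (N-1)).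
  assert (SE: sphere N E). { split. apply inRN_ev; lia. unfold E. rewrite dot_ev_r by lia. unfold ev. rewrite Nat.eqb_refl; auto. }
  set (w := vsub e' E).
  assert (Hw: inRN N w) by (apply inRN_sub; [auto | apply SE]).
  assert (KEY: forall y, sphere N y -> sphere N (reflect N w y) /\ dot N (reflect N w y) e' = y (N-1)%nat).
  { intros y Sy. destruct (Req_dec (dot N w w) 0) as [Z|Z].
    - rewrite reflect_zero by (auto; apply Sy). split; auto.
      assert (e' = E). { pose proof (dot_zero_vec N w Hw Z) as W. apply functional_extensionality; intro i.
        assert (w i = 0) by (rewrite W; auto). unfold w, vsub in H. lra. }
      rewrite H. unfold E. apply dot_ev_r. lia.
    - split. apply sphere_reflect; auto. destruct Sy as [Hy _].
      rewrite dot_reflect by (auto; apply Se'). unfold w. rewrite swap_reflect; auto.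
      unfold E. apply dot_ev_r; lia. intro Q. apply Z. unfold w. rewrite Q.
      unfold dot. rewrite (sumN_ext _ _ (fun _ => 0)). apply sumN_zero. intros; unfold vsub; ring. }
  set (U := fun y => u (reflect N w y)).
  assert (MONOU: forall y y', sphere N y -> sphere N y' -> y (N-1)%nat <= y' (N-1)%nat -> U y <= U y').
  { intros y y' Sy Sy' H. destruct (KEY y Sy) as [S1 D1]. destruct (KEY y' Sy') as [S2 D2].
    unfold U. apply MONO'; auto. lra. }
  assert (ROT: forall y, rot N (hh N w) u y = U y). { intros; unfold rot, U. rewrite hh_apply. auto. }
  assert (PRE: forall x, sphere N x -> exists y, sphere N y /\ U y = u x).
  { intros x Sx. exists (reflect N w x). split. apply (KEY x Sx). unfold U.
    destruct (Req_dec (dot N w w) 0) as [Z|Z]. rewrite (reflect_zero N w x) by (auto; apply Sx). rewrite (reflect_zero N w x) by (auto; apply Sx). auto.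
    rewrite reflect_invol; auto. apply Sx. }
  set (G := fun t => U (circ_pt N t)).
  assert (GC: forall t eps, eps > 0 -> exists del, del > 0 /\ forall s, Rabs (s - t) < del -> Rabs (G s - G t) < eps).
  { intros t eps Heps.
    destruct (u_cont_curve N u Hcont (fun t => reflect N w (circ_pt N t)) t (proj1 (KEY _ (circ_sphere N t HN)))) with (eps := eps)
      as [del [Hdel Hd]]; auto.
    - intros i Hi. unfold reflect. destruct (Nat.ltb_spec i N); [|lia].
      apply continuity_pt_ext with (f := fun t => cos t * ev (N-2) i + sin t * ev (N-1) i - (cos t * w (N-2)%nat + sin t * w (N-1)%nat) * (2 / dot N w w * w i)).
      intros s. rewrite circ_eq by auto. rewrite dot_add_r, !dot_sc_r, !dot_ev_r by lia. unfold vadd, vsc. unfold Rdiv. ring.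
      apply cpt_of_ex_derive. auto_derive. auto.
    - exists del; split; auto. intros s Hs. apply Hd; auto. apply (KEY _ (circ_sphere N s HN)). }
  assert (Hpi: PI / 2 > 0) by (pose proof PI_RGT_0; lra).
  set (Amax := fun t => - (PI/2) <= t <= PI/2 /\ forall y, sphere N y -> U y <= G t).
  assert (Atop: Amax (PI/2)).
  { split. lra. intros y Sy. apply MONOU; auto. apply circ_sphere; auto. rewrite circ_last, sin_PI2 by auto.
    apply (coord_bound N y); auto; lia. }
  destruct (completeness (fun s => Amax (-s))) as [m [Hm1 Hm2]].
  { exists (PI/2). intros s [[H1 H2] _]. lra. }
  { exists (-(PI/2)). rewrite Ropp_involutive. auto. }
  set (al1 := -m).
  assert (A1le: forall t, Amax t -> al1 <= t). { intros t At. unfold al1. assert (m >= -t). apply Rle_ge, Hm1. rewrite Ropp_involutive; auto. lra. }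
  assert (A1b: - (PI/2) <= al1 <= PI/2).
  { split. unfold al1. assert (m <= PI/2). apply Hm2. intros s [[H1 H2] _]. lra. lra. apply A1le; auto. }
  assert (A1in: Amax al1).
  { split; auto. intros y Sy. apply Rnot_lt_le. intro L.
    destruct (GC al1 (U y - G al1)) as [del [Hdel Hd]]. lra.
    destruct (lub_approx _ m del (conj Hm1 Hm2) Hdel) as [s [As Hs]].
    assert (al1 <= -s) by (apply A1le; auto). destruct As as [_ As].
    specialize (As y Sy). assert (K: Rabs (G (-s) - G al1) < U y - G al1).
    { apply Hd. rewrite Rabs_right; unfold al1 in *; lra. }
    apply Rabs_def2 in K. lra. }
  set (Amin := fun t => - (PI/2) <= t <= PI/2 /\ forall y, sphere N y -> G t <= U y).
  assert (Abot: Amin (-(PI/2))).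
  { split. lra. intros y Sy. apply MONOU; auto. apply circ_sphere; auto. rewrite circ_last, sin_neg, sin_PI2 by auto.
    apply (coord_bound N y); auto; lia. }
  destruct (completeness Amin) as [al2 [Hl1 Hl2]].
  { exists (PI/2). intros s [[H1 H2] _]. lra. }
  { exists (-(PI/2)). auto. }
  assert (A2le: forall t, Amin t -> t <= al2). { intros; apply Hl1; auto. }
  assert (A2b: - (PI/2) <= al2 <= PI/2).
  { split. apply A2le; auto. apply Hl2. intros s [[H1 H2] _]. lra. }
  assert (A2in: Amin al2).
  { split; auto. intros y Sy. apply Rnot_lt_le. intro L.
    destruct (GC al2 (G al2 - U y)) as [del [Hdel Hd]]. lra.
    destruct (lub_approx _ al2 del (conj Hl1 Hl2) Hdel) as [s [As Hs]].
    assert (s <= al2) by (apply A2le; auto). destruct As as [_ As].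
    specialize (As y Sy). assert (K: Rabs (G s - G al2) < G al2 - U y).
    { apply Hd. rewrite Rabs_left1; lra. }
    apply Rabs_def2 in K. lra. }
  assert (Hsb: forall t, -1 <= sin t <= 1) by (intros; apply SIN_bound).
  assert (Nl: (N - 1 < N)%nat) by lia.
  exists (hh N w), (sin al1), (sin al2).
  split. apply hh_orth; auto.
  split. auto. split. auto.
  assert (MAXc: forall x, sphere N x -> (forall y, sphere N y -> U y <= U x) <-> x (N-1)%nat >= sin al1).
  { intros x Sx. split.
    - intros Hmax. set (t := x (N-1)%nat). assert (Ht: -1 <= t <= 1) by (apply (coord_bound N x); auto).
      set (be := asin t). assert (Sbe: sin be = t) by (apply sin_asin; auto).
      assert (Bb: - (PI/2) <= be <= PI/2) by apply asin_bound. unfold t in *.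
      assert (Amax be). { split; auto. intros y Sy. eapply Rle_trans. apply Hmax; auto.
        apply MONOU; auto. apply circ_sphere; auto. rewrite circ_last by auto. lra. }
      pose proof (A1le be H). destruct (Req_dec al1 be). subst be. rewrite H1, Sbe. lra.
      pose proof (sin_increasing_1 al1 be ltac:(lra) ltac:(lra) ltac:(lra) ltac:(lra) ltac:(lra)). lra.
    - intros Hx y Sy. eapply Rle_trans. apply (proj2 A1in); auto. apply MONOU; auto. apply circ_sphere; auto.
      rewrite circ_last by auto. lra. }
  assert (MINc: forall x, sphere N x -> (forall y, sphere N y -> U x <= U y) <-> x (N-1)%nat <= sin al2).
  { intros x Sx. split.
    - intros Hmin. set (t := x (N-1)%nat). assert (Ht: -1 <= t <= 1) by (apply (coord_bound N x); auto).
      set (be := asin t). assert (Sbe: sin be = t) by (apply sin_asin; auto).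
      assert (Bb: - (PI/2) <= be <= PI/2) by apply asin_bound. unfold t in *.
      assert (Amin be). { split; auto. intros y Sy. eapply Rle_trans. 2: apply Hmin; auto.
        apply MONOU; auto. apply circ_sphere; auto. rewrite circ_last by auto. lra. }
      pose proof (A2le be H). destruct (Req_dec al2 be). subst be. rewrite H1, Sbe. lra.
      pose proof (sin_increasing_1 be al2 ltac:(lra) ltac:(lra) ltac:(lra) ltac:(lra) ltac:(lra)). lra.
    - intros Hx y Sy. eapply Rle_trans. 2: apply (proj2 A2in); auto. apply MONOU; auto. apply circ_sphere; auto.
      rewrite circ_last by auto. lra. }
  split.
  { apply Rnot_le_gt. intro L.
    assert (CONST: forall y y', sphere N y -> sphere N y' -> U y <= U y').
    { intros y y' Sy Sy'. assert (Sc: sphere N (circ_pt N al1)) by (apply circ_sphere; auto).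
      eapply Rle_trans. apply (proj2 (MAXc _ Sc)). rewrite circ_last by auto. lra. auto.
      apply (proj2 (MINc _ Sc)). rewrite circ_last by auto. lra. auto. }
    destruct (PRE x0 Sx0) as [yx [Syx Ex]]. destruct (PRE y0 Sy0) as [yy [Syy Ey]].
    apply Hne. rewrite <- Ex, <- Ey. apply Rle_antisym; apply CONST; auto. }
  split. { intros x Sx. rewrite <- (MAXc x Sx). split; intros H y Sy; specialize (H y Sy); rewrite !ROT in *; auto. }
  split. { intros x Sx. rewrite <- (MINc x Sx). split; intros H y Sy; specialize (H y Sy); rewrite !ROT in *; auto. }
  split. { intros h Hh x y Sx Sy Hx Hy. rewrite !ROT. apply Rle_antisym; apply MONOU; auto; lra. }
  intros a0 b0 Ha1 Ha2 Hb. rewrite !ROT. apply MONOU; try apply circ_sphere; auto. rewrite !circ_last by auto.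
  destruct (Req_dec a0 b0). subst; lra.
  pose proof (sin_decreasing_1 a0 b0 ltac:(lra) ltac:(lra) ltac:(lra) ltac:(lra) ltac:(lra)). lra.
Qed.
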